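(* Let $m\ge1$ be an integer and $H>1$ real. Let $L_m=\{\boldsymbol\theta\in\mathbb R^m: 0\le\theta_1\le\cdots\le\theta_m\le\pi\}$ and define $f=(f_1,\ldots,f_{m+1}):(1,H]\times L_m\to\mathbb R^{m+1}$ by letting $f_j(y,\theta_1,\ldots,\theta_m)=a_j$, where \[ (t-y)(t-y^{-1})\prod_{k=1}^m(t-e^{i\theta_k})(t-e^{-i\theta_k})=t^{2m+2}+a_1t^{2m+1}+\cdots+a_{m+1}t^{m+1}+\cdots+a_1t+1 . \] Then the Jacobian $J_f=\left|\frac{\partial(f_1,\ldots,f_{m+1})}{\partial(y,\theta_1,\ldots,\theta_m)}\right|$ equals \[ J_f(y,\theta_1,\ldots,\theta_m)=2^{\frac{m(m+1)}{2}}\left(1-\frac{1}{y^2}\right)\prod_{l=1}^{m}\left(y+\frac1y-2\cos\theta_l\right)\prod_{l=1}^m\sin\theta_l\prod_{1\le i<j\le m}\left|\cos\theta_i-\cos\theta_j\right|. \] *)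

(* Defs.v *)
From HB Require Import structures.
From mathcomp Require Import all_boot all_order all_algebra.
From mathcomp Require Import all_classical all_reals all_analysis.
Set Implicit Arguments. Unset Strict Implicit. Unset Printing Implicit Defensive.
Import Order.TTheory GRing.Theory Num.Theory.
Import numFieldNormedType.Exports.
Local Open Scope ring_scope.

Definition ypt {R : realType} {m : nat} (v : 'rV[R]_m.+1) : R := v 0 ord0.
Definition thpt {R : realType} {m : nat} (v : 'rV[R]_m.+1) (k : 'I_m) : R :=
  v 0 (lift ord0 k).

(* The polynomial (t - y)(t - 1/y) prod_k (t - e^{i th_k})(t - e^{-i th_k}),
   where (t - e^{i th})(t - e^{-i th}) = t^2 - 2 cos(th) t + 1. *)
Definition Ppoly {R : realType} {m : nat} (v : 'rV[R]_m.+1) : {poly R} :=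
  ('X - (ypt v)%:P) * ('X - ((ypt v)^-1)%:P) *
  \prod_(k < m) ('X^2 - (2 * cos (thpt v k))%:P * 'X + 1).

(* f(v) = (a_1, ..., a_{m+1}); a_(j+1) is the coefficient of t^(2m+1-j). *)
Definition fmap {R : realType} {m : nat} (v : 'rV[R]_m.+1) : 'rV[R]_m.+1 :=
  \row_(j < m.+1) (Ppoly v)`_(2 * m + 1 - j).

Definition jacobian_mx {R : realType} {m : nat} (x : 'rV[R]_m.+1) : 'M[R]_m.+1 :=
  \matrix_(i < m.+1, j < m.+1)
     'D_(delta_mx 0 j) (fun v : 'rV[R]_m.+1 => fmap v 0 i) x.

(* Main.v *)
Require Import Defs.
From HB Require Import structures.
From mathcomp Require Import all_boot all_order all_algebra.
From mathcomp Require Import all_classical all_reals all_analysis.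
From mathcomp Require Import fingroup perm.
From mathcomp Require Import ring lra zify.
From Stdlib Require Import Lia.
Import Order.TTheory GRing.Theory Num.Theory.
Import numFieldNormedType.Exports.
Local Open Scope ring_scope.

Set Implicit Arguments. Unset Strict Implicit. Unset Printing Implicit Defensive.

Section CoreS.
Variable R : numDomainType.

Definition Phi n (q : {poly R}) : {poly R} :=
  \sum_(d < n.+1) q`_d *: ('X^(n - d) * ('X^2 + 1) ^+ d).

Lemma PhiB n p q : Phi n (p - q) = Phi n p - Phi n q.
Proof.
rewrite /Phi -sumrB; apply: eq_bigr => d _.
by rewrite coefB scalerBl.
Qed.

Lemma PhiZ n c p : Phi n (c *: p) = c *: Phi n p.
Proof.
rewrite /Phi scaler_sumr; apply: eq_bigr => d _.
by rewrite coefZ scalerA.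
Qed.

Lemma PhiX n (q : {poly R}) : (size q <= n.+1)%N -> Phi n.+1 (q * 'X) = ('X^2 + 1) * Phi n q.
Proof.
move=> sq; rewrite /Phi big_ord_recl coefMX eqxx scale0r add0r mulr_sumr.
apply: eq_bigr => d _; rewrite coefMX /= /bump leq0n add1n add0n subSS exprS.
by rewrite -scalerAr mulrCA.
Qed.

Lemma Phi1 n (q : {poly R}) : (size q <= n.+1)%N -> Phi n.+1 q = 'X * Phi n q.
Proof.
move=> sq; rewrite /Phi big_ord_recr /= nth_default // scale0r addr0 mulr_sumr.
apply: eq_bigr => d _ /=; rewrite subSn; last by rewrite -ltnS.
by rewrite exprS -scalerAr mulrA.
Qed.

Lemma Phi_step n (q : {poly R}) c : (size q <= n.+1)%N ->
  Phi n.+1 (q * ('X - c%:P)) = Phi n q * ('X^2 - c%:P * 'X + 1).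
Proof.
move=> sq; rewrite mulrBr [q * c%:P]mulrC [c%:P * q]mul_polyC PhiB PhiZ PhiX //.
rewrite Phi1 // -mul_polyC; move: (Phi n q) => P; rewrite mulrA [RHS]mulrC !mulrDl mulNr mul1r; by rewrite addrAC.
Qed.

Lemma Phi_prod (I : Type) (s : seq I) (r : I -> R) :
  \prod_(l <- s) ('X^2 - (r l)%:P * 'X + 1) =
  Phi (size s) (\prod_(l <- s) ('X - (r l)%:P)).
Proof.
elim: s => [|a s IH].
  by rewrite !big_nil /Phi big_ord1 coef1 /= scale1r !expr0 mulr1.
rewrite !big_cons IH /= [_ * \prod_(_ <- _) _]mulrC Phi_step; first exact: mulrC.
by rewrite size_prod_XsubC.
Qed.

Lemma size_filter_neq n (j : 'I_n.+1) :
  size [seq l <- index_enum 'I_n.+1 | l != j] = n.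
Proof.
have H : #|predC1 j| = n by rewrite cardC1 card_ord.
apply: (etrans _ H); by rewrite cardE /enum_mem [index_enum _]unlock.
Qed.


Lemma sizeXX b : size (('X^2 + 1 : {poly R}) ^+ b) = (2 * b).+1.
Proof.
have m1 : ('X^2 + 1 : {poly R}) \is monic by rewrite -polyC1 monicXnaddC.
have := size_exp ('X^2 + 1 : {poly R}) b.
rewrite -polyC1 size_XnaddC //= mul2n => <-.
rewrite prednK // size_poly_gt0 monic_neq0 // monic_exp //.
Qed.

Lemma leadXX b : lead_coef (('X^2 + 1 : {poly R}) ^+ b) = 1.
Proof. by rewrite lead_coef_exp -polyC1 lead_coefXnaddC // expr1n. Qed.

Variable n : nat.
Variable r : 'I_n.+1 -> R.

Definition qq (j : 'I_n.+1) := \prod_(l < n.+1 | l != j) ('X - (r l)%:P).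
Definition QQ (j : 'I_n.+1) :=
  \prod_(l < n.+1 | l != j) ('X^2 - (r l)%:P * 'X + 1).

Lemma QQ_Phi j : QQ j = Phi n (qq j).
Proof. by rewrite /QQ /qq -big_filter Phi_prod size_filter_neq big_filter. Qed.

Lemma size_qq j : size (qq j) = n.+1.
Proof. by rewrite /qq -big_filter size_prod_XsubC size_filter_neq. Qed.

Definition Tm : 'M[R]_n.+1 :=
  \matrix_(i < n.+1, d < n.+1) ('X^(n - d) * ('X^2 + 1) ^+ d)`_(2 * n - i).
Definition Nm : 'M[R]_n.+1 := \matrix_(d < n.+1, j < n.+1) (qq j)`_d.

Lemma M_eq : \matrix_(i < n.+1, j < n.+1) (QQ j)`_(2 * n - i) = Tm *m Nm.
Proof.
apply/matrixP => i j; rewrite !mxE QQ_Phi /Phi coef_sum; apply: eq_bigr => d _.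
by rewrite coefZ !mxE mulrC.
Qed.

Lemma detTm_abs : `|\det Tm| = 1.
Proof.
pose s : {perm 'I_n.+1} := perm (@rev_ord_inj n.+1).
pose T2 : 'M[R]_n.+1 := \matrix_(i, d) Tm i (rev_ord d).
have -> : Tm = col_perm s T2.
  by apply/matrixP => i d; rewrite !mxE permE rev_ordK.
rewrite col_permE det_mulmx det_perm normrM normrX normrN1 expr1n mulr1.
rewrite det_trig; last first.
  apply/is_trig_mxP => i d id; rewrite !mxE coefXnM.
  case: ifP => // _; rewrite nth_default // sizeXX /=.
  have := ltn_ord d; have := ltn_ord i; lia.
rewrite big1 ?normr1 // => i _; rewrite !mxE coefXnM /=.
have -> : (2 * n - i < n - (n - i))%N = false.
  by apply/negbTE; rewrite -leqNgt; have := ltn_ord i; lia.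
have -> : (2 * n - i - (n - (n - i)) = (2 * (n - i)).+1.-1)%N.
  by have := ltn_ord i; lia.
by rewrite -sizeXX -lead_coefE leadXX.
Qed.


Definition Pp := \prod_(i < n.+1) \prod_(j < n.+1 | (i < j)%N) `|r i - r j|.

Lemma qq_root j k : k != j -> (qq j).[r k] = 0.
Proof.
move=> kj; rewrite /qq horner_prod (bigD1 k) //= hornerXsubC subrr mul0r //.
Qed.

Lemma NW : Nm^T *m Vandermonde n.+1 (\row_k r k) =
  diag_mx (\row_j (qq j).[r j]).
Proof.
apply/matrixP => j k.
have -> : (Nm^T *m Vandermonde n.+1 (\row_k r k)) j k = (qq j).[r k].
  rewrite mxE (@horner_coef_wide _ n.+1) ?size_qq //.
  by apply: eq_bigr => d _; rewrite !mxE.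
rewrite !mxE.
have [->|kj] := eqVneq j k; first by rewrite mulr1n.
by rewrite qq_root 1?eq_sym // mulr0n.
Qed.

Lemma detW_abs : `|\det (Vandermonde n.+1 (\row_k r k))| = Pp.
Proof.
rewrite det_Vandermonde normr_prod; apply: eq_bigr => i _.
by rewrite normr_prod; apply: eq_bigr => j _; rewrite !mxE distrC.
Qed.

Lemma prod_pairs :
  `|\prod_(j < n.+1) \prod_(l < n.+1 | l != j) (r j - r l)| = Pp * Pp.
Proof.
rewrite normr_prod.
have -> : \prod_(j < n.+1) `|\prod_(l < n.+1 | l != j) (r j - r l)| =
   \prod_(j < n.+1) ((\prod_(l < n.+1 | (j < l)%N) `|r j - r l|) *
                     (\prod_(l < n.+1 | (l < j)%N) `|r j - r l|)).
  apply: eq_bigr => j _; rewrite normr_prod (bigID (fun l : 'I_n.+1 => (j < l)%N)) /=.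
  congr (_ * _); apply: eq_bigl => l.
    by rewrite neq_ltn; case: (ltngtP j l).
  by rewrite neq_ltn; case: (ltngtP j l).
rewrite big_split /=; congr (_ * _).
rewrite (eq_bigr _ (fun j _ => big_mkcond _ _)) exchange_big /=.
apply: eq_bigr => l _; rewrite [RHS]big_mkcond /=; apply: eq_bigr => j _.
by case: ifP => _ //; rewrite distrC.
Qed.

Lemma core : `|\det (\matrix_(i < n.+1, j < n.+1) (QQ j)`_(2 * n - i))| = Pp.
Proof.
rewrite M_eq det_mulmx normrM detTm_abs mul1r.
case: (boolP [exists i : 'I_n.+1, exists j : 'I_n.+1, (i < j)%N && (r i == r j)]).
  move/existsP => [i /existsP [j /andP [ij /eqP rij]]].
  have -> : \det Nm = 0.
    rewrite -det_tr; apply: (@determinant_alternate _ _ _ i j).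
      by rewrite neq_ltn ij.
    move=> d; rewrite !mxE; congr (_`_d).
    rewrite /qq (bigD1 j) /=; last by rewrite eq_sym neq_ltn ij.
    rewrite [in RHS](bigD1 i) /=; last by rewrite neq_ltn ij.
    by rewrite rij (eq_bigl (fun i0 : 'I_n.+1 => (i0 != j) && (i0 != i))) // => l; exact: andbC.
  rewrite normr0 /Pp (bigD1 i) //= [X in X * _](bigD1 j) //= rij subrr normr0.
  by rewrite !mul0r.
rewrite negb_exists => /forallP H.
have Ppos : 0 < Pp.
  apply: prodr_gt0 => i _; apply: prodr_gt0 => j ij; rewrite normr_gt0 subr_eq0.
  by have := H i; rewrite negb_exists => /forallP /(_ j); rewrite ij.
apply: (mulIf (lt0r_neq0 Ppos)).
rewrite -{1}detW_abs -normrM -det_tr -det_mulmx NW det_diag -prod_pairs.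
congr `|_|; apply: eq_bigr => j _; rewrite !mxE /qq horner_prod.
by apply: eq_bigr => l _; rewrite hornerXsubC.
Qed.

End CoreS.
Lemma quadXX (R : comRingType) (a b : R) :
  ('X - a%:P) * ('X - b%:P) = 'X^2 - (a + b)%:P * 'X + (a * b)%:P :> {poly R}.
Proof.
rewrite polyCD polyCM; move: a%:P b%:P => A B.
rewrite mulrBr !mulrBl opprB expr2 mulrDl opprD [B * 'X]mulrC !addrA.
by rewrite addrAC.
Qed.
Lemma coef_quad (R : comRingType) s e (Q : {poly R}) N :
  (('X^2 - s%:P * 'X + e%:P) * Q)`_N = ('X^2 * Q)`_N - s * ('X * Q)`_N + e * Q`_N.
Proof. by rewrite !mulrDl mulNr !coefD coefN -[s%:P * _ * Q]mulrA !coefCM. Qed.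

Section Ana.
Variable R : realType.

Lemma isdD (f g : R -> R) (x df dg : R) : is_derive x (1:R) f df -> is_derive x (1:R) g dg ->
  is_derive x (1:R) (fun z => f z + g z) (df + dg).
Proof. by move=> ? ?; apply: is_deriveD. Qed.

Lemma isdB (f g : R -> R) (x df dg : R) : is_derive x (1:R) f df -> is_derive x (1:R) g dg ->
  is_derive x (1:R) (fun z => f z - g z) (df - dg).
Proof. by move=> ? ?; apply: is_deriveB. Qed.

Lemma isdM (f g : R -> R) (x df dg : R) : is_derive x (1:R) f df -> is_derive x (1:R) g dg ->
  is_derive x (1:R) (fun z => f z * g z) (f x * dg + g x * df).
Proof. by move=> ? ?; apply: is_deriveM. Qed.

Lemma isdC (c x : R) : is_derive x (1:R) (fun _ : R => c) 0.
Proof. exact: is_derive_cst. Qed.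

Lemma isdS (y : R) : is_derive (0:R) (1:R) (fun h : R => h + y) 1.
Proof.
have H := @isdD id (fun _ => y) 0 1 0 (is_derive_id _ _) (isdC _ _).
by rewrite addr0 in H.
Qed.

Lemma isdV (y : R) : y != 0 -> is_derive (0:R) (1:R) (fun h : R => (h + y)^-1) (- (y ^+ 2)^-1).
Proof.
move=> y0; have y0' : (fun h : R => h + y) 0 != 0 by rewrite /= add0r.
have dS : derivable (fun h : R => h + y) 0 1 by case: (isdS y).
have dV := @derivableV R R (fun h : R => h + y) 0 1 y0' dS.
have eV := @deriveV R R (fun h : R => h + y) 0 1 y0' dS.
apply: (DeriveDef dV).
case: (isdS y) => _ dv; rewrite eV dv /= add0r.
by rewrite /GRing.scale /= mulr1.
Qed.

Lemma isdcos (t : R) : is_derive (0:R) (1:R) (fun h : R => cos (h + t)) (- sin t).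
Proof.
have -> : (fun h : R => cos (h + t)) = (fun h => cos h * cos t - sin h * sin t).
  by apply/funext => h; rewrite cosD.
have H := isdB (isdM (is_derive_cos 0) (isdC (cos t) 0)) (isdM (is_derive_sin 0) (isdC (sin t) 0)).
move: H; rewrite sin0 cos0 /= => H.
by apply: is_derive_eq H _; ring.
Qed.

Lemma D_line m (g : 'rV[R]_m.+1 -> R) v x :
  'D_v g x = 'D_1 (fun h : R => g (h *: v + x)) 0.
Proof.
rewrite /derive.
have -> : (fun h : R => h^-1 *: ((g \o shift x) (h *: v) - g x)) =
  (fun h : R => h^-1 *: (((fun h0 : R => g (h0 *: v + x)) \o shift 0) (h *: 1) -
     (fun h0 : R => g (h0 *: v + x)) 0)).
  by apply/funext => h; rewrite /= scale0r add0r addr0 [h *: 1]mulr1.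
by [].
Qed.


Variable m : nat.

Definition rr (v : 'rV[R]_m.+1) (j : 'I_m.+1) : R :=
  if unlift ord0 j is Some k then 2 * cos (thpt v k) else ypt v + (ypt v)^-1.

Definition cc (v : 'rV[R]_m.+1) (j : 'I_m.+1) : R :=
  if unlift ord0 j is Some k then 2 * sin (thpt v k) else - (1 - (ypt v ^+ 2)^-1).

Lemma Ppoly_prod v : ypt v != 0 ->
  Ppoly v = \prod_(l < m.+1) ('X^2 - (rr v l)%:P * 'X + 1).
Proof.
move=> y0; rewrite /Ppoly big_ord_recl /rr unlift_none quadXX mulfV // polyC1.
by congr (_ * _); apply: eq_bigr => k _; rewrite liftK.
Qed.

Lemma coordE (h : R) j (x : 'rV[R]_m.+1) c :
  (h *: delta_mx 0 j + x) 0 c = (if c == j then h else 0) + x 0 c.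
Proof. by rewrite !mxE eqxx /=; case: (c == j); rewrite ?mulr1 ?mulr0. Qed.

Lemma rr_other (h : R) j x l : l != j -> rr (h *: delta_mx 0 j + x) l = rr x l.
Proof.
move=> lj; rewrite /rr; case: (unliftP ord0 l) => [k' E|E]; rewrite /thpt /ypt coordE -E (negbTE lj) add0r //.
Qed.

Lemma QQ0 x : QQ (rr x) ord0 = \prod_(k < m) ('X^2 - (2 * cos (thpt x k))%:P * 'X + 1).
Proof.
rewrite /QQ big_mkcond big_ord_recl eqxx /= mul1r; apply: eq_bigr => k _.
by rewrite /rr liftK.
Qed.

Lemma Dcol_lift (x : 'rV[R]_m.+1) (k : 'I_m) (i : 'I_m.+1) : ypt x != 0 ->
  jacobian_mx x i (lift ord0 k) =
  2 * sin (thpt x k) * ('X * QQ (rr x) (lift ord0 k))`_(2 * m + 1 - i).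
Proof.
move=> y0; rewrite mxE D_line.
set N := (2 * m + 1 - i)%N; set j := lift ord0 k; set Q := QQ (rr x) j.
have E : (fun h : R => Defs.fmap (h *: delta_mx 0 j + x) 0 i) =
  (fun h => ('X^2 * Q)`_N - 2 * cos (h + thpt x k) * ('X * Q)`_N + 1 * Q`_N).
  apply/funext => h; rewrite mxE.
  rewrite Ppoly_prod; last by rewrite /ypt coordE (negbTE (neq_lift _ _)) add0r.
  rewrite (bigD1 j) //= -polyC1 coef_quad.
  have -> : rr (h *: delta_mx 0 j + x) j = 2 * cos (h + thpt x k).
    by rewrite /rr liftK /thpt coordE eqxx.
  have -> : \prod_(l < m.+1 | l != j) ('X^2 - (rr (h *: delta_mx 0 j + x) l)%:P * 'X + 1) = Q.
    by apply: eq_bigr => l lj; rewrite rr_other.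
  by [].
rewrite E.
have H := isdD (isdB (isdC (('X^2 * Q)`_N) 0)
            (isdM (isdM (isdC 2 0) (isdcos (thpt x k))) (isdC (('X * Q)`_N) 0)))
          (isdC (1 * Q`_N) 0).
case: H => _ ->.
ring.
Qed.

Lemma Dcol0 (x : 'rV[R]_m.+1) (i : 'I_m.+1) : ypt x != 0 ->
  jacobian_mx x i ord0 =
  - (1 - (ypt x ^+ 2)^-1) * ('X * QQ (rr x) ord0)`_(2 * m + 1 - i).
Proof.
move=> y0; rewrite mxE D_line.
set N := (2 * m + 1 - i)%N; set Q := QQ (rr x) ord0.
have E : (fun h : R => Defs.fmap (h *: delta_mx 0 ord0 + x) 0 i) =
  (fun h => ('X^2 * Q)`_N - ((h + ypt x) + (h + ypt x)^-1) * ('X * Q)`_N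
            + ((h + ypt x) * (h + ypt x)^-1) * Q`_N).
  apply/funext => h; rewrite mxE /Ppoly quadXX coef_quad /Q QQ0.
  have -> : ypt (h *: delta_mx 0 ord0 + x) = h + ypt x.
    by rewrite /ypt coordE eqxx.
  have -> : \prod_(k < m) ('X^2 - (2 * cos (thpt (h *: delta_mx 0 ord0 + x) k))%:P * 'X + 1)
    = \prod_(k < m) ('X^2 - (2 * cos (thpt x k))%:P * 'X + 1).
    by apply: eq_bigr => l _; rewrite /thpt coordE eq_sym (negbTE (neq_lift _ _)) add0r.
  by [].

rewrite E.
have H := isdD (isdB (isdC (('X^2 * Q)`_N) 0)
            (isdM (isdD (isdS (ypt x)) (isdV y0)) (isdC (('X * Q)`_N) 0)))
          (isdM (isdM (isdS (ypt x)) (isdV y0)) (isdC (Q`_N) 0)).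
case: H => _ ->.
rewrite !add0r.
by field.
Qed.


Lemma jac_eq x : ypt x != 0 ->
  jacobian_mx x = (\matrix_(i < m.+1, j < m.+1) (QQ (rr x) j)`_(2 * m - i))
                    *m diag_mx (\row_j cc x j).
Proof.
move=> y0; rewrite mul_mx_diag; apply/matrixP => i j.
have HN : (2 * m + 1 - i)%N == 0%N = false.
  by apply/negbTE; have := ltn_ord i; lia.
have HN' : (2 * m + 1 - i).-1 = (2 * m - i)%N by have := ltn_ord i; lia.
case: (unliftP ord0 j) => [k|] ->.
  by rewrite Dcol_lift // !mxE /cc liftK coefXM HN HN' mulrC.
by rewrite Dcol0 // !mxE /cc unlift_none coefXM HN HN' mulrC.
Qed.

End Ana.

Lemma L1 (R : realType) n (F : 'I_n.+1 -> R) :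
  \prod_(j < n.+1 | (@ord0 n < j)%N) F j = \prod_(k < n) F (lift ord0 k).
Proof.
rewrite big_mkcond big_ord_recl /= mul1r; apply: eq_bigr => k _.
by [].
Qed.

Lemma L2 (R : realType) n (F : 'I_n.+1 -> R) (k : 'I_n) :
  \prod_(j < n.+1 | (lift ord0 k < j)%N) F j =
  \prod_(j < n | (k < j)%N) F (lift ord0 j).
Proof.
rewrite big_mkcond big_ord_recl /= mul1r [RHS]big_mkcond; apply: eq_bigr => j _.
by rewrite /bump !leq0n !add1n ltnS.
Qed.

Lemma pow2 (R : realType) n :
  \prod_(k < n) \prod_(j < n | (k < j)%N) (2 : R) = 2 ^+ 'C(n, 2).
Proof.
elim: n => [|n IH]; first by rewrite big_ord0 bin0n expr0.
rewrite big_ord_recl (L1 (fun _ => (2:R))) prodr_const card_ord.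
rewrite (eq_bigr (fun k : 'I_n => \prod_(j < n | (k < j)%N) (2:R))); last first.
  by move=> k _; rewrite (L2 (fun _ => (2:R))).
by rewrite IH binS bin1 exprD mulrC.
Qed.

Unset Implicit Arguments. Set Strict Implicit.

Theorem lemma2 (R : realType) (m : nat) (H : R) (x : 'rV[R]_m.+1) :
  (1 <= m)%N -> 1 < H ->
  1 < ypt x <= H ->
  (forall k : 'I_m, 0 <= thpt x k <= pi) ->
  (forall i j : 'I_m, (i <= j)%N -> thpt x i <= thpt x j) ->
  `|\det (jacobian_mx x)| =
    2 ^+ ((m * m.+1)./2) * (1 - (ypt x ^+ 2)^-1) *
    (\prod_(l < m) (ypt x + (ypt x)^-1 - 2 * cos (thpt x l))) *
    (\prod_(l < m) sin (thpt x l)) *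
    (\prod_(i < m) \prod_(j < m | (i < j)%N) `|cos (thpt x i) - cos (thpt x j)|).
Proof.
move=> _ _ /andP [y1 _] th _.
set y := ypt x.
have ypos : 0 < y by apply: lt_trans y1.
have y0 : y != 0 by rewrite gt_eqF.
rewrite jac_eq // det_mulmx normrM (core (rr x)) det_diag normr_prod.
set A := \prod_(l < m) _.
set S := \prod_(l < m) sin _.
set G := \prod_(i < m) _.
have hcc : \prod_(j < m.+1) `|(\row_j cc x j) 0 j| =
    (1 - (y ^+ 2)^-1) * (2 ^+ m * S).
  rewrite big_ord_recl !mxE /cc unlift_none normrN ger0_norm; last first.
    rewrite subr_ge0 invf_le1 ?exprn_gt0 //.
    by rewrite expr2; nra.
  congr (_ * _).
  rewrite (eq_bigr (fun k : 'I_m => 2 * sin (thpt x k))); last first.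
    move=> k _; rewrite !mxE liftK ger0_norm // mulr_ge0 //.
    exact: sin_ge0_pi.
  by rewrite big_split /= prodr_const card_ord.
have y2 : 2 <= y + y^-1.
  have hi : y^-1 * y = 1 by exact: mulVf.
  have h1 : 0 <= (y - 1) ^+ 2 / y by rewrite divr_ge0 ?sqr_ge0 // ltW.
  have h2 : (y - 1) ^+ 2 / y = y + y^-1 - 2 by field.
  lra.
have hPp : Pp (rr x) = A * (2 ^+ 'C(m, 2) * G).
  rewrite /Pp big_ord_recl (L1 (fun j => `|rr x ord0 - rr x j|)).
  congr (_ * _).
    apply: eq_bigr => k _; rewrite /rr unlift_none liftK ger0_norm //.
    rewrite subr_ge0; apply: le_trans y2.
    by rewrite -[X in _ <= X]mulr1 ler_wpM2l // cos_le1.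
  rewrite (eq_bigr (fun k : 'I_m =>
     \prod_(j < m | (k < j)%N) (2 * `|cos (thpt x k) - cos (thpt x j)|))); last first.
    move=> k _; rewrite (L2 (fun j => `|rr x (lift ord0 k) - rr x j|)).
    apply: eq_bigr => j _; rewrite /rr !liftK -mulrBr normrM.
    by rewrite (@ger0_norm _ 2).
  rewrite (eq_bigr (fun k : 'I_m =>
     (\prod_(j < m | (k < j)%N) 2) * \prod_(j < m | (k < j)%N) `|cos (thpt x k) - cos (thpt x j)|)); last first.
    by move=> k _; rewrite big_split.
  by rewrite big_split /= pow2.
rewrite hcc hPp.
have -> : (m * m.+1)./2 = (m + 'C(m, 2))%N.
  by rewrite mulnC -bin2 binS bin1 addnC.
rewrite exprD.
move: (2 ^+ m) (2 ^+ 'C(m, 2)) => P Q.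
ring.
Qed.
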